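(* Let $\mathcal{R}\subset[0,\infty)$ be a non-empty closed set and $\psi\colon\mathbb{R}\to[0,\infty]$ lower semicontinuous. Then $I\colon\mathbb{R}\to[0,\infty]$ defined by $I(a)=\inf_{\gamma\in\mathcal{R}}[\ell(\gamma;a)+\psi(\gamma)]$ is lower semicontinuous.
   Context: For $\gamma\ge0$: $\ell(\gamma;a)=\infty$ for $a<0$, $\ell(\gamma;0)=\gamma$, and $\ell(\gamma;a)=\gamma-a+a\log(a/\gamma)$ for $a>0$ (interpreted as $\infty$ when $\gamma=0$). *)

(* Defs.v *)
From HB Require Import structures.
From mathcomp Require Import all_boot all_order all_algebra.
From mathcomp Require Import all_classical all_reals all_analysis.
Set Implicit Arguments. Unset Strict Implicit. Unset Printing Implicit Defensive.
Import Order.TTheory GRing.Theory Num.Theory.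
Import numFieldNormedType.Exports.
Local Open Scope ring_scope.

(* ell gamma a, for gamma >= 0 (the value for gamma < 0 is irrelevant):
   +oo if a < 0; gamma if a = 0; gamma - a + a log(a/gamma) if a > 0,
   interpreted as +oo when gamma = 0. *)
Definition ell (R : realType) (g a : R) : \bar R :=
  if a < 0 then +oo%E
  else if a == 0 then g%:E
  else if g == 0 then +oo%E
  else (g - a + a * ln (a / g))%:E.

Definition Ifun (R : realType) (Rs : set R) (psi : R -> \bar R) (a : R) : \bar R :=
  ereal_inf [set (ell g a + psi g)%E | g in Rs].

(* Main.v *)
Require Import Defs.
From HB Require Import structures.
From mathcomp Require Import all_boot all_order all_algebra.
From mathcomp Require Import all_classical all_reals all_analysis.
From mathcomp Require Import ring lra.
Import Order.TTheory GRing.Theory Num.Theory.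
Import numFieldNormedType.Exports.
Local Open Scope classical_set_scope.
Local Open Scope ring_scope.
Section S.
Variable R : realType.
Implicit Types g a c : R.

Lemma ln_ge1V (y : R) : 0 < y -> 1 - y^-1 <= ln y.
Proof.
move=> y0.
have h := @le_ln1Dx R (y^-1 - 1).
have : ln (y^-1) <= y^-1 - 1.
  have -> : y^-1 = 1 + (y^-1 - 1) by rewrite addrC subrK.
  apply: le_trans (h _) _; first by rewrite ltrBrDl addrN invr_gt0.
  lra.
rewrite lnV ?posrE //; lra.
Qed.

Lemma ell_ge g a c : 0 <= g -> 0 <= a -> 0 < c ->
  ((g + a * ln c - g * c)%:E <= ell g a)%E.
Proof.
move=> g0 a0 c0; rewrite /ell.
rewrite ltNge a0 /=.
have [->|an0] := eqVneq a 0.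
  rewrite lee_fin mul0r addr0 gerBl mulr_ge0 // ltW //.
have {}a0 : 0 < a by rewrite lt_neqAle eq_sym an0.
have [->|gn0] := eqVneq g 0; first by rewrite leey.
have {}g0 : 0 < g by rewrite lt_neqAle eq_sym gn0.
rewrite lee_fin.
have e : a / g = c * (a / (g * c)).
  by field; rewrite ?gt_eqF.
rewrite e lnM ?posrE ?divr_gt0 ?mulr_gt0 //.
have h2 : 1 - (a / (g * c))^-1 <= ln (a / (g * c)) by apply: ln_ge1V; rewrite divr_gt0 ?mulr_gt0.
rewrite invf_div in h2.
have : a * (1 - g * c / a) <= a * ln (a / (g * c)) by rewrite ler_pM2l.
have -> : a * (1 - g * c / a) = a - g * c by field; rewrite gt_eqF.
lra.
Qed.
End S.
Arguments ell_ge {R g a c}.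
Section T.
Variable R : realType.
Implicit Types g a c s : R.

Lemma pick_c g0 a0 s : 0 <= g0 -> 0 <= a0 -> (s%:E < ell g0 a0)%E ->
  exists2 c, 0 < c & s < g0 + a0 * ln c - g0 * c.
Proof.
move=> g0p a0p; rewrite /ell (ltNge a0) a0p /=.
have [->|an0] := eqVneq a0 0.
  rewrite lte_fin => sg.
  exists ((g0 - s) / (g0 + 1)); first by rewrite divr_gt0 ?subr_gt0 //; lra.
  rewrite mul0r addr0.
  have : g0 * ((g0 - s) / (g0 + 1)) < g0 - s.
    rewrite mulrA ltr_pdivrMr; last lra.
    nra.
  lra.
have a0p' : 0 < a0 by rewrite lt_neqAle eq_sym an0.
have [->|gn0] := eqVneq g0 0.
  move=> _; exists (expR ((`|s| + 1) / a0)); first exact: expR_gt0.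
  rewrite expRK mulrCA divff ?gt_eqF // mulr1 mul0r subr0 add0r.
  have := ler_norm s; lra.
have g0p' : 0 < g0 by rewrite lt_neqAle eq_sym gn0.
rewrite lte_fin => h; exists (a0 / g0); first by rewrite divr_gt0.
have -> : g0 * (a0 / g0) = a0 by field; rewrite gt_eqF.
lra.
Qed.

Lemma ell_lsc g0 a0 s : 0 <= g0 -> (s%:E < ell g0 a0)%E ->
  \forall g \near g0 & a \near a0, 0 <= g -> (s%:E < ell g a)%E.
Proof.
move=> g0p hs.
have [a0n|a0p] := ltP a0 0.
  near=> g a => _.
  have an : a < 0 by near: a; apply: (@lt_nbhsl R); exact: a0n.
  by rewrite /ell an ltey.
have [c c0 hc] := pick_c _ _ _ g0p a0p hs.
pose d := (g0 + a0 * ln c - g0 * c - s) / (`|1 - c| + `|ln c| + 1).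
have dp : 0 < d.
  apply: divr_gt0; first by rewrite subr_gt0.
  have := normr_ge0 (1 - c); have := normr_ge0 (ln c); move=> ? ?; lra.
near=> g a => /= gp; rewrite /=.
have hg : `|g0 - g| < d.
  by near: g; exists d => //= y.
have ha : `|a0 - a| < d.
  by near: a; exists d => //= y.
have [an|ap] := ltP a 0; first by rewrite /ell an ltey.
apply: (lt_le_trans _ (ell_ge gp ap c0)); rewrite lte_fin.

have e1 : (g0 - g) * (1 - c) <= d * `|1 - c|.
  apply: le_trans (ler_norm _) _; rewrite normrM ler_wpM2r // ltW //.
have e2 : (a0 - a) * ln c <= d * `|ln c|.
  apply: le_trans (ler_norm _) _; rewrite normrM ler_wpM2r // ltW //.
have Dp : 0 < `|1 - c| + `|ln c| + 1.
  have := normr_ge0 (1 - c); have := normr_ge0 (ln c); move=> ? ?; lra.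
have dD : d * (`|1 - c| + `|ln c| + 1) = g0 + a0 * ln c - g0 * c - s.
  by rewrite /d divfK // gt_eqF.
have id : g + a * ln c - g * c =
  g0 + a0 * ln c - g0 * c - (g0 - g) * (1 - c) - (a0 - a) * ln c by ring.
rewrite id; rewrite !mulrDr mulr1 in dD; lra.
Unshelve. all: by end_near. Qed.
End T.
Lemma esplit (R : realType) (e p : \bar R) (t : R) : (0 <= e)%E -> (0 <= p)%E ->
  (t%:E < e + p)%E -> exists s1, exists s2, [/\ s1 + s2 = t, (s1%:E < e)%E & (s2%:E < p)%E].
Proof.
case: e => [e| |] //; case: p => [p| |] //; rewrite ?lee_fin => e0 p0.
- rewrite -EFinD lte_fin => h.
  exists (e - (e + p - t) / 2), (p - (e + p - t) / 2); split; rewrite ?lte_fin; lra.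
- move=> _; exists (-1), (t + 1); split; rewrite ?ltey ?lte_fin //; lra.
- move=> _; exists (t + 1), (-1); split; rewrite ?ltey ?lte_fin //; lra.
- move=> _; exists (t + 1), (-1); split; rewrite ?ltey ?lte_fin //; lra.
Qed.
Lemma ell_ge0 (R : realType) (g a : R) : 0 <= g -> (0 <= ell g a)%E.
Proof.
move=> g0; have [an|ap] := ltP a 0; first by rewrite /ell an.
apply: le_trans (ell_ge (c := 1) g0 ap ltr01); rewrite ln1 mulr0 addr0 mulr1 subrr //.
Qed.
Theorem proposition7 (R : realType) (Rs : set R) (psi : R -> \bar R) :
  Rs !=set0 -> closed Rs -> Rs `<=` [set x | 0 <= x] ->
  (forall x, (0 <= psi x)%E) -> lower_semicontinuous psi ->
  lower_semicontinuous (Ifun Rs psi).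
Proof.
move=> _ Rcl Rpos psi0 psilsc a0 t ht.
have [t' tt' ht'] : exists2 t', t < t' & (t'%:E < Ifun Rs psi a0)%E.
  move: ht; case: (Ifun Rs psi a0) => [r| |] //=.
    rewrite lte_fin => h; exists ((t + r) / 2); [lra | rewrite lte_fin; lra].
  move=> _; exists (t + 1); [lra | exact: ltey].
have hI : forall g, Rs g -> (t'%:E < ell g a0 + psi g)%E.
  move=> g Rg; apply: (lt_le_trans ht'); apply: ereal_inf_lbound; by exists g.
pose M := 2 * (`|t'| + `|a0| + 2).
pose K := `[0, M] `&` Rs.
have Kc : compact K by apply: compact_closedI => //; exact: segment_compact.
have cov : \forall a \near a0, K `<=` (fun g => (t'%:E < ell g a + psi g)%E).
  apply: ((near_covering_withinP K).2 ((compact_near_coveringP K).1 Kc) R (nbhs a0)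
     (fun a g => (t'%:E < ell g a + psi g)%E) _).
  move=> g [_ Rg].
  have [s1 [s2 [s12 h1 h2]]] := @esplit R _ _ _ (@ell_ge0 R g a0 (Rpos _ Rg)) (psi0 g) (hI g Rg).
  have H1 := @ell_lsc R _ _ _ (Rpos _ Rg) h1.
  have [V hV Vs] := psilsc g s2 h2.
  have H2 : \forall g' \near g & a \near a0, (s2%:E < psi g')%E.
    exists (V, setT) => /=; first by split => //; exact: filterT.
    by move=> [g' a] [/= Vg _]; exact: Vs.
  apply: (filterS2 _ _ H1 H2) => -[g' a] /= e1 e2 [_ Rg'].
  rewrite -s12 EFinD; apply: lteD => //; exact: e1 (Rpos _ Rg').
exists [set a | K `<=` (fun g => (t'%:E < ell g a + psi g)%E) /\ `|a0 - a| < 1].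
  apply: filterI => //; by exists 1 => //= y.
move=> a [Ka ha] /=.
apply: (@lt_le_trans _ _ t'%:E); first by rewrite lte_fin.
apply/ereal_infP => _ [g Rg <-].
have [gM|gM] := leP g M.
  apply/ltW/Ka; split => //=.
  apply/andP; split => //; exact: Rpos.
apply: le_trans (leeDl _ _) => //.
have [an|ap] := ltP a 0; first by rewrite /ell an leey.
have g0 : 0 <= g by exact: Rpos.
apply: le_trans (ell_ge (c := 2^-1) g0 ap _) => //.
rewrite lee_fin.
have l2 : -1 <= ln (2^-1 : R).
  have := @ln_ge1V R (2^-1) (ltac:(lra)); rewrite invrK; lra.
have : - a <= a * ln (2^-1 : R).
  by rewrite -mulrN1 ler_wpM2l.
have := ler_norm t'; have : a <= `|a0| + 1.
  have : a - a0 <= `|a0 - a| by rewrite distrC ler_norm.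
  have := ler_norm a0; lra.
rewrite /M in gM; lra.
Unshelve. all: by end_near. Qed.
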